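(* Let $C \subset \mathbb{R}^n$ be convex and closed with nonempty interior, and let $h\colon C\to\mathbb{R}$ be Legendre on $C$ and continuous on $C$, such that condition (A) holds: for every sequence $(x_k)_{k\in\mathbb{N}} \subset \mathrm{int}\, C$ and every $y \in C$, if $D_h(y,x_k) \to 0$ then $x_k \to y$. Then $h$ is strictly convex on $C$.
   Context: A convex function $h \colon C \to \mathbb{R}$ on a convex set $C\subset\mathbb{R}^n$ with nonempty interior is called Legendre if (1) $h$ is continuously differentiable on $\mathrm{int}\, C$ and $\|\nabla h(x)\| \to +\infty$ whenever $x \in \mathrm{int}\, C$ approaches a point of the boundary of $C$; and (2) $h$ is strictly convex on $\mathrm{int}\, C$. The Bregman divergence is $D_h(y,x) = h(y) - h(x) - \langle \nabla h(x), y - x\rangle$ for $y \in C$, $x \in \mathrm{int}\, C$. *)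

(* Defs.v *)
From HB Require Import structures.
From mathcomp Require Import all_boot all_order all_algebra.
From mathcomp Require Import all_classical all_reals all_analysis.
Set Implicit Arguments. Unset Strict Implicit. Unset Printing Implicit Defensive.
Import Order.TTheory GRing.Theory Num.Theory numFieldNormedType.Exports.
Local Open Scope classical_set_scope.
Local Open Scope ring_scope.

Section Defs.
Context {R : realType} {n : nat}.
Local Notation V := 'rV[R]_n.

Definition inner (u v : V) : R := \sum_(i < n) u ord0 i * v ord0 i.

Definition grad (h : V -> R) (x : V) : V :=
  \row_(i < n) ('d h x (delta_mx ord0 i : V)).

Definition convex_set_in (C : set V) : Prop :=
  forall x y (t : R), C x -> C y -> 0 <= t <= 1 ->
    C (t *: x + (1 - t) *: y).

Definition convex_on (D : set V) (h : V -> R) : Prop :=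
  forall x y (t : R), D x -> D y -> 0 <= t <= 1 ->
    h (t *: x + (1 - t) *: y) <= t * h x + (1 - t) * h y.

Definition strictly_convex_on (D : set V) (h : V -> R) : Prop :=
  forall x y (t : R), D x -> D y -> x != y -> 0 < t < 1 ->
    h (t *: x + (1 - t) *: y) < t * h x + (1 - t) * h y.

(** Legendre function on C (h : C -> R is represented by a total function
    whose values outside C are irrelevant). *)
Definition legendre (C : set V) (h : V -> R) : Prop :=
  [/\ convex_on C h,
      (forall x, interior C x -> differentiable h x),
      (forall x, interior C x -> {for x, continuous (grad h)}),
      (forall b, (closure C `\` interior C) b ->
         `|grad h x| @[x --> within (interior C) (nbhs b)] --> +oo)
    &
      strictly_convex_on (interior C) h].

Definition bregman (h : V -> R) (y x : V) : R :=
  h y - h x - inner (grad h x) (y - x).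

End Defs.

(* Main.v *)
Require Import Defs.
From HB Require Import structures.
From mathcomp Require Import all_boot all_order all_algebra.
From mathcomp Require Import all_classical all_reals all_analysis.
From mathcomp Require Import ring lra.
Import Order.TTheory GRing.Theory Num.Theory numFieldNormedType.Exports.
Local Open Scope classical_set_scope.
Local Open Scope ring_scope.

Section Helpers.
Context {R : realType} {n : nat}.
Local Notation V := 'rV[R]_n.

Lemma inner_grad (h : V -> R) (p v : V) : inner (grad h p) v = 'd h p v.
Proof.
rewrite {2}(row_sum_delta v) linear_sum /inner; apply: eq_bigr => i _.
by rewrite mxE linearZ /= mulrC.
Qed.

Lemma key_ineq (C : set V) (h : V -> R) (p q : V) :
  convex_on C h -> C p -> C q -> differentiable h p ->
  'd h p (q - p) <= h q - h p.
Proof.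
move=> hc Cp Cq dp.
rewrite -deriveE //.
have := @diff_derivable _ _ _ h p (q - p) dp.
move=> /cvg_ex [l Hl].
rewrite /derive (cvg_lim _ Hl) //.
have Hr : (fun s0 : R => s0^-1 *: ((h \o shift p) (s0 *: (q - p)) - h p)) @ 0^'+ --> l.
  exact: cvg_dnbhs_at_right.
apply: (cvgr_to_le Hr).
near=> s.
have s0 : 0 < s by near: s; exact: nbhs_right_gt.
have s1 : s < 1 by near: s; exact: nbhs_right_lt.
rewrite /=.
have -> : s *: (q - p) + p = s *: q + (1 - s) *: p.
  by rewrite scalerBr scalerBl scale1r addrA addrAC.
have := hc q p s Cq Cp; rewrite (ltW s0) (ltW s1) => /(_ isT) H.
rewrite ler_pdivrMl //.
have -> : s * (h q - h p) = s * h q + (1 - s) * h p - h p by ring.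
by rewrite lerD2r.
Unshelve. all: by end_near. Qed.

Lemma interior_comb (C : set V) (c z : V) (s : R) :
  convex_set_in C -> interior C c -> C z -> 0 < s <= 1 ->
  interior C (s *: c + (1 - s) *: z).
Proof.
move=> Cconv /nbhs_ballP [e e0 He] Cz /andP[s0 s1].
apply/nbhs_ballP; exists (s * e); first exact: mulr_gt0.
move=> w; rewrite -ball_normE /= => Hw.
set m := s *: c + (1 - s) *: z in Hw *.
have -> : w = s *: (c + s^-1 *: (w - m)) + (1 - s) *: z.
  rewrite scalerDr scalerA mulfV ?gt_eqF // scale1r addrAC -/m.
  by rewrite addrC subrK.
apply: Cconv => //; last by rewrite (ltW s0) s1.
apply: He; rewrite -ball_normE /=.
rewrite opprD addrA subrr sub0r normrN normrZ ger0_norm ?invr_ge0 ?(ltW s0) //.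
rewrite ltr_pdivrMl // distrC; exact: Hw.
Qed.

End Helpers.

Theorem lemma6 (R : realType) (n : nat) (C : set 'rV[R]_n) (h : 'rV[R]_n -> R) :
  convex_set_in C -> closed C -> interior C !=set0 ->
  legendre C h ->
  {within C, continuous h} ->
  (forall (x : nat -> 'rV[R]_n) (y : 'rV[R]_n),
     (forall k, interior C (x k)) -> C y ->
     bregman h y (x k) @[k --> \oo] --> 0 ->
     x k @[k --> \oo] --> y) ->
  strictly_convex_on C h.
Proof.
move=> Cconv Cclosed [c intc] [hconv hdiff _ _ _] hcont HA.
move=> x y t Cx Cy xy /andP[t0 t1].
have Cc : C c by exact: interior_subset.
rewrite lt_neqAle hconv ?ltW ?t0 ?t1 // andbT; apply/negP => /eqP heq.
set z := t *: x + (1 - t) *: y in heq.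
have Cz : C z by apply: Cconv => //; rewrite !ltW.
pose s (k : nat) : R := (k.+2%:R)^-1.
have s0 k : 0 < s k by rewrite invr_gt0 ltr0n.
have s2 k : s k <= 2^-1.
  by rewrite lef_pV2 ?posrE ?ltr0n // ler_nat.
have scvg : s k @[k --> \oo] --> 0.
  have := @cvg_harmonic R; rewrite -cvg_shiftS -cvg_shiftS.
  by apply: cvg_trans; apply: near_eq_cvg; near=> k.
pose xk k := s k *: c + (1 - s k) *: z.
have intx k : interior C (xk k).
  apply: interior_comb => //; rewrite s0 /=.
  by apply: (le_trans (s2 k)); rewrite invf_le1 ?ler1n ?ltr0n.
have Cxk k : C (xk k) by exact: interior_subset.
have Dge0 q p : C q -> interior C p -> 0 <= bregman h q p.
  move=> Cq ip; rewrite /bregman inner_grad subr_ge0.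
  exact: (@key_ineq R n C h _ _ hconv) (interior_subset ip) Cq (hdiff _ ip).
have Dsplit k : bregman h z (xk k) =
    t * bregman h x (xk k) + (1 - t) * bregman h y (xk k).
  rewrite /bregman !inner_grad.
  have -> : z - xk k = t *: (x - xk k) + (1 - t) *: (y - xk k).
    rewrite /z !scalerBr addrACA -opprD -scalerDl.
    by rewrite (_ : t + (1 - t) = 1) ?scale1r //; ring.
  rewrite linearD !linearZ /= heq.
  set a := @GRing.scale _ _ t _; set b := @GRing.scale _ _ (1 - t) _.
  have -> : a = t * 'd h (xk k) (x - xk k) by [].
  have -> : b = (1 - t) * 'd h (xk k) (y - xk k) by [].
  ring.
have xcvg : xk k @[k --> \oo] --> z.
  have -> : xk = fun k => s k *: (c - z) + z.
    apply: funext => k; rewrite /xk scalerBr scalerBl scale1r.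
    by rewrite addrA addrAC.
  rewrite -[z in _ --> z]add0r; apply: cvgD; last exact: cvg_cst.
  rewrite -(scale0r (c - z)); apply: cvgZ => //; exact: cvg_cst.
have hcvg : h (xk k) @[k --> \oo] --> h z.
  have Hw := (subspace_continuousP _ _).1 hcont z Cz.
  apply: (cvg_comp _ _ _ Hw) => U /= HU.
  have := xcvg _ HU; rewrite nbhs_simpl /=; apply: filterS => k Hk; exact: Hk (Cxk k).
have Dz0 : bregman h z (xk k) @[k --> \oo] --> 0.
  pose u k := 2 * ((1 - s k) * (h z - h (xk k)) + s k * (h c - h (xk k))).
  have ucvg : u k @[k --> \oo] --> 0.
    have -> : 0 = 2 * ((1 - 0) * (h z - h z) + 0 * (h c - h z)) :> R.
      by rewrite subrr !mulr0 mul0r addr0 mulr0.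
    apply: cvgM; first exact: cvg_cst.
    apply: cvgD; apply: cvgM => //.
    - apply: cvgB => //; exact: cvg_cst.
    - apply: cvgB => //; exact: cvg_cst.
    - apply: cvgB => //; exact: cvg_cst.
  apply: (squeeze_cvgr _ (cvg_cst 0) ucvg); near=> k.
  rewrite Dge0 //= /u.
  have K := @key_ineq R n C h _ _ hconv (Cxk k) Cc (hdiff _ (intx k)).
  have E1 : c - xk k = (1 - s k) *: (c - z).
    by apply/rowP => i; rewrite /xk !mxE; ring.
  have E2 : z - xk k = - (s k *: (c - z)).
    by apply/rowP => i; rewrite /xk !mxE; ring.
  rewrite E1 linearZ /= in K.
  have Dk := Dge0 z (xk k) Cz (intx k).
  rewrite /bregman inner_grad E2 linearN linearZ /= in Dk *.
  set g := 'd h (xk k) (c - z) in K Dk *.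
  set a := @GRing.scale _ _ (1 - s k) g in K; set b := @GRing.scale _ _ (s k) g in Dk *.
  have ea : a = (1 - s k) * g by [].
  have eb : b = s k * g by [].
  rewrite ea in K; rewrite eb in Dk *.
  have sk0 := s0 k; have sk2 := s2 k.
  have H1 : 0 <= (1 - 2 * s k) * (h z - h (xk k) - - (s k * g)).
    apply: mulr_ge0 => //; lra.
  have H2 : 0 <= s k * (h c - h (xk k) - (1 - s k) * g).
    apply: mulr_ge0; [exact: ltW | lra].
  nra.
have t10 : 0 < 1 - t by rewrite subr_gt0.
have Dx0 : bregman h x (xk k) @[k --> \oo] --> 0.
  have up : t^-1 * bregman h z (xk k) @[k --> \oo] --> 0.
    rewrite -(mulr0 t^-1); apply: cvgM => //; exact: cvg_cst.
  apply: (squeeze_cvgr _ (cvg_cst 0) up); near=> k.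
  rewrite Dge0 //= Dsplit.
  have := Dge0 y (xk k) Cy (intx k); have := Dge0 x (xk k) Cx (intx k).
  set A := bregman h x (xk k); set B := bregman h y (xk k) => HA0 HB0.
  rewrite mulrDr mulrA mulVf ?gt_eqF // mul1r lerDl.
  by apply: mulr_ge0; [rewrite invr_ge0 ltW | apply: mulr_ge0 => //; rewrite ltW].
have Dy0 : bregman h y (xk k) @[k --> \oo] --> 0.
  have up : (1 - t)^-1 * bregman h z (xk k) @[k --> \oo] --> 0.
    rewrite -(mulr0 (1 - t)^-1); apply: cvgM => //; exact: cvg_cst.
  apply: (squeeze_cvgr _ (cvg_cst 0) up); near=> k.
  rewrite Dge0 //= Dsplit.
  have := Dge0 y (xk k) Cy (intx k); have := Dge0 x (xk k) Cx (intx k).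
  set A := bregman h x (xk k); set B := bregman h y (xk k) => HA0 HB0.
  rewrite mulrDr [_ * ((1 - t) * B)]mulrA mulVf ?gt_eqF // mul1r lerDr.
  by apply: mulr_ge0; [rewrite invr_ge0 ltW | apply: mulr_ge0 => //; rewrite ltW].
have X1 := HA xk x intx Cx Dx0.
have X2 := HA xk y intx Cy Dy0.
have exy : x = y := cvg_unique (@norm_hausdorff _ _) X1 X2.
by move: xy; rewrite exy => /eqP.
Unshelve. all: by end_near.
Qed.
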